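(* Let $G=(V,E)$ be a graph of maximum degree $\Delta$ and let $\mathscr{S}$ be any block system for $G$. Then $\mu^+(\mathscr{S})\le\Delta$. If in addition $G$ is $\Delta$-regular, then $\frac{\Delta}{2}\le\mu^+(\mathscr{S})\le\Delta$.
   Context: Potts configurations on $G$: $\sigma\in\Omega=[q]^V$, $q$ a positive integer. A block system for $G$ is a collection $\mathscr{S}$ of subsets of $V$ whose union is $V$. For $S\subseteq V$, $\partial S$ is the set of vertices of $V\setminus S$ with a neighbour in $S$. For $X\in\Omega$ and $c\in[q]^S$, $X^{(S,c)}$ equals $c$ on $S$ and $X$ off $S$; $\mu_{X,S}(c)$ is the number of monochromatic edges (edges with both endpoints the same colour) of $X^{(S,c)}$ incident with at least one vertex of $S$. A colour used by $c$ is free with respect to $X,S$ if it does not occur among $\{X(u):u\in\partial S\}$; $f(X,S,c)$ is the number of free colours used by $c$. $\mu^+_{X,S,f}=\max\{\mu_{X,S}(c)/(|S|-f): c\in[q]^S,\ f(X,S,c)=f\}$ (empty maximum $=0$), and $\mu^+(\mathscr{S})=\max_{S\in\mathscr{S}}\max_{X\in\Omega}\max_{f\in\{0,\dots,|S|-1\}}\mu^+_{X,S,f}$. *)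

(* Defs.v *)
From HB Require Import structures.
From mathcomp Require Import all_boot all_order all_algebra.
Set Implicit Arguments. Unset Strict Implicit. Unset Printing Implicit Defensive.
Import Order.TTheory GRing.Theory Num.Theory.

Section PottsBlocks.
Variables (V : finType) (e : rel V) (q : nat).

(* A simple graph on V is given by a symmetric irreflexive relation e. *)
Definition deg (v : V) : nat := #|[set u | e v u]|.
Definition maxdeg : nat := \max_(v : V) deg v.

Definition edgeset : {set {set V}} :=
  [set A : {set V} | [exists u, exists v, (A == [set u; v]) && e u v]].

Definition bdry (S : {set V}) : {set V} :=
  [set v | (v \notin S) && [exists u in S, e u v]].

(* X^{(S,c)}: c on S, X off S (c : [q]^V, only its restriction to S is used) *)
Definition recolour (X c : {ffun V -> 'I_q}) (S : {set V}) : {ffun V -> 'I_q} :=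
  [ffun v => if v \in S then c v else X v].

Definition mu (X : {ffun V -> 'I_q}) (S : {set V}) (c : {ffun V -> 'I_q}) : nat :=
  #|[set A in edgeset | [exists u, exists v,
       [&& A == [set u; v], e u v,
           recolour X c S u == recolour X c S v & (u \in S) || (v \in S)]]]|.

Definition nfree (X : {ffun V -> 'I_q}) (S : {set V}) (c : {ffun V -> 'I_q}) : nat :=
  #|[set k : 'I_q | [exists v in S, c v == k] && ~~ [exists u in bdry S, X u == k]]|.

(* mu^+_{X,S,f}; empty maximum is 0 (all values are >= 0) *)
Definition muplusXSf (X : {ffun V -> 'I_q}) (S : {set V}) (f : nat) : rat :=
  \big[Num.max/0%R]_(c : {ffun V -> 'I_q} | nfree X S c == f)
     ((mu X S c)%:R / (#|S| - f)%N%:R)%R.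

Definition muplus (Ssys : {set {set V}}) : rat :=
  \big[Num.max/0%R]_(S in Ssys) \big[Num.max/0%R]_(X : {ffun V -> 'I_q})
     \big[Num.max/0%R]_(f < #|S|) muplusXSf X S f.

End PottsBlocks.

Definition block_system (V : finType) (Ssys : {set {set V}}) : Prop :=
  \bigcup_(S in Ssys) S = [set: V].

(* Main.v *)
Require Import Defs.
From HB Require Import structures.
From mathcomp Require Import all_boot all_order all_algebra.
Import Order.TTheory GRing.Theory Num.Theory.
Set Implicit Arguments. Unset Strict Implicit.

Section Prf.
Variables (V : finType) (e : rel V) (q : nat).
Hypotheses (esym : symmetric e) (eirr : irreflexive e).

Lemma deg_le v : (deg e v <= maxdeg e)%N.
Proof. rewrite /maxdeg; apply: leq_bigmax. Qed.

Definition Ew w := [set [set w; u] | u in [set u | e w u]].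

Lemma mu_le (X c : {ffun V -> 'I_q}) (S : {set V}) : (mu e X S c <= maxdeg e * (#|S| - nfree e X S c))%N.
Proof.
pose F := [set k : 'I_q | [exists v in S, c v == k] && ~~ [exists u in bdry e S, X u == k]].
have -> : nfree e X S c = #|F| by [].
pose pk k := [pick w in S | c w == k].
have pkP k : k \in F -> exists2 w, pk k = Some w & (w \in S) && (c w == k).
  rewrite inE => /andP[/existsP[v0 /andP[v0S /eqP cv0]] _].
  rewrite /pk; case: pickP => [w Hw | /(_ v0)]; last by rewrite v0S cv0 eqxx.
  by exists w.
pose R := [set v in S | (c v \in F) && (pk (c v) == Some v)].
have RS : R \subset S by apply/subsetP=> v; rewrite inE => /andP[].
have cardR : #|R| = #|F|.
  have <- : c @: R = F.
    apply/setP => k; apply/imsetP/idP.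
      by case=> v; rewrite inE => /and3P[_ ? _] ->.
    move=> Fk; have [w pkw /andP[wS /eqP cw]] := pkP k Fk.
    by exists w => //; rewrite inE wS cw Fk pkw eqxx.
  rewrite card_in_imset // => v w; rewrite !inE => /and3P[_ _ /eqP pv] /and3P[_ _ /eqP pw] cvw.
  by move: pv; rewrite cvw pw => -[].
have cSR : #|S :\: R| = #|S| - #|F| by rewrite cardsD (setIidPr RS) cardR.
rewrite -cSR mulnC -sum_nat_const.
apply: (@leq_trans (\sum_(w in S :\: R) #|Ew w|)); last first.
  apply: leq_sum => w _; apply: leq_trans (deg_le w).
  exact: leq_imset_card.
apply: (@leq_trans #|\bigcup_(w in S :\: R) Ew w|); last first.
  elim/big_ind2: _ => //; first by rewrite cards0.
  move=> A1 n1 A2 n2 h1 h2; apply: leq_trans (leq_card_setU _ _) _.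
  exact: leq_add.
apply: subset_leq_card; apply/subsetP => A; rewrite inE => /andP[_].
move=> /existsP[u /existsP[v /and4P[/eqP-> euv colE uvS]]].
have inE_ w z : e w z -> w \in S :\: R -> [set w; z] \in \bigcup_(w in S :\: R) Ew w.
  move=> ewz wSR; apply/bigcupP; exists w => //; apply/imsetP; exists z => //.
  by rewrite inE.
wlog uS : u v euv colE {uvS} / u \in S.
  move=> H; case/orP: uvS => [uS|vS]; first exact: H.
  rewrite setUC; apply: H => //; [by rewrite esym | by rewrite eq_sym].
case: (boolP (u \in R)) => uR; last by apply: inE_ => //; rewrite inE uR uS.
have := uR; rewrite inE => /and3P[_ cuF /eqP pku].
move: colE; rewrite /recolour !ffunE uS.
case: (boolP (v \in S)) => vS /eqP cuv.
  have vR : v \notin R.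
    apply/negP; rewrite inE => /and3P[_ _ /eqP]; rewrite -cuv pku => -[vu].
    by move: euv; rewrite vu eirr.
  by rewrite setUC; apply: inE_; [rewrite esym | rewrite inE vR vS].
exfalso; move: cuF; rewrite inE => /andP[_ /negP]; apply.
apply/existsP; exists v; rewrite cuv eqxx andbT /bdry inE vS /=.
by apply/existsP; exists u; rewrite uS euv.
Qed.

Lemma mu_ge (k : 'I_q) (S : {set V}) : (forall v, deg e v = maxdeg e) ->
  (maxdeg e * #|S| <= 2 * mu e [ffun=> k] S [ffun=> k])%N.
Proof.
move=> reg.
set X0 : {ffun V -> 'I_q} := [ffun=> k].
pose M := [set A in edgeset e | [exists u, exists v,
       [&& A == [set u; v], e u v,
           recolour X0 X0 S u == recolour X0 X0 S v & (u \in S) || (v \in S)]]].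
have -> : mu e X0 S X0 = #|M| by [].
have colc z : recolour X0 X0 S z = k by rewrite /recolour !ffunE; case: ifP.
have Mcard A : A \in M -> (#|A| <= 2)%N.
  rewrite !inE => /andP[].
  by move=> /existsP[u /existsP[v /andP[/eqP -> _]]] _; rewrite cards2; case: (_ != _).
rewrite mulnC -sum_nat_const (eq_bigr (fun v => deg e v)) //.
apply: (@leq_trans (\sum_(v in S) #|[set A in M | v \in A]|)).
  apply: leq_sum => v vS.
  have <- : #|[set [set v; u] | u in [set u | e v u]]| = deg e v.
    rewrite card_in_imset // => u u'; rewrite !inE => evu evu' H.
    have : u \in [set v; u] by rewrite !inE eqxx orbT.
    rewrite H !inE => /orP[/eqP uv|/eqP //].
    by move: evu; rewrite uv eirr.
  apply: subset_leq_card; apply/subsetP => A /imsetP[u]; rewrite inE => evu ->.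
  rewrite !inE eqxx /= andbT; apply/andP; split.

    by apply/existsP; exists v; apply/existsP; exists u; rewrite eqxx evu.
  by apply/existsP; exists v; apply/existsP; exists u; rewrite eqxx evu !colc eqxx vS.
apply: (@leq_trans (\sum_(v in S) \sum_(A in M) (v \in A : nat))).
  apply: eq_leq; apply: eq_bigr => v _.
  rewrite -sum1_card (eq_bigl (fun A => (A \in M) && (v \in A))); last by move=> A; rewrite inE.
  by rewrite big_mkcondr; apply: eq_bigr => A _; case: (v \in A).
rewrite exchange_big /= mulnC -sum_nat_const.
apply: leq_sum => A AM.
apply: leq_trans (Mcard A AM).
rewrite -big_mkcondr /=.
rewrite sum1dep_card; apply: subset_leq_card; apply/subsetP => x.
by rewrite inE => /andP[].
Qed.
End Prf.

Theorem proposition2p4 (V : finType) (e : rel V) (q : nat) (Ssys : {set {set V}}) :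
  symmetric e -> irreflexive e -> (0 < q)%N -> block_system Ssys ->
  (muplus e q Ssys <= (maxdeg e)%:R)%R /\
  ((forall v : V, deg e v = maxdeg e) ->
     ((maxdeg e)%:R / 2%:R <= muplus e q Ssys)%R).
Proof.
move=> esym eirr qpos bsys; split.
  have D0 : (0 <= (maxdeg e)%:R :> rat)%R by rewrite ler0n.
  apply: bigmax_le => // S _; apply: bigmax_le => // X _; apply: bigmax_le => // f _.
  apply: bigmax_le => // c /eqP cf.
  have Sf : (0 < #|S| - f)%N by rewrite subn_gt0 ltn_ord.
  rewrite ler_pdivrMr ?ltr0n // -natrM ler_nat -cf.
  exact: mu_le.
move=> reg.
case: (posnP (maxdeg e)) => [->|Dpos].
  rewrite mul0r; exact: bigmax_ge_id.
case: (pickP (fun _ : V => true)) => [v0 _|none]; last first.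
  by move: Dpos; rewrite /maxdeg big_pred0.
have : v0 \in \bigcup_(S in Ssys) S by rewrite bsys inE.
move=> /bigcupP[S SS v0S].
have : (0 < deg e v0)%N by rewrite reg.
rewrite /deg card_gt0 => /set0Pn[u]; rewrite inE => ev0u.
pose k : 'I_q := Ordinal qpos.
pose X0 : {ffun V -> 'I_q} := [ffun=> k].
pose f := nfree e X0 S X0.
have fS : (f < #|S|)%N.
  have fle : (f <= 1)%N.
    rewrite -(cards1 k); apply: subset_leq_card; apply/subsetP => k'.
    rewrite !inE => /andP[/existsP[w /andP[_]]]; rewrite ffunE => /eqP <- _.
    by rewrite eqxx.
  case: (boolP (u \in S)) => uS.
    apply: leq_ltn_trans fle _.
    have : #|[set v0; u]| = 2.
      by rewrite cards2; case: eqP => // uv; move: ev0u; rewrite uv eirr.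
    move=> <-; apply: subset_leq_card; apply/subsetP => x; rewrite !inE.
    by case/orP => /eqP ->.
  have -> : f = 0%N.
    apply/eqP; rewrite cards_eq0; apply/eqP/setP => k'; rewrite !inE.
    apply/negbTE/negP => /andP[/existsP[w /andP[_]]]; rewrite ffunE => /eqP <- /negP; apply.
    apply/existsP; exists u.
    rewrite ffunE eqxx andbT /bdry inE uS /=; apply/existsP; exists v0.
    by rewrite v0S ev0u.
  by rewrite card_gt0; apply/set0Pn; exists v0.
rewrite /muplus; apply: le_trans (le_bigmax_cond _ _ SS).
apply: le_trans (le_bigmax_cond _ _ (isT : predT X0)).
apply: le_trans (le_bigmax_cond _ _ (isT : predT (Ordinal fS))).
rewrite /muplusXSf.
have hc : nfree e X0 S X0 == Ordinal fS by [].
apply: le_trans (le_bigmax_cond _ _ hc).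
have Sf : (0 < #|S| - f)%N by rewrite subn_gt0.
rewrite ler_pdivlMr ?ltr0n // mulrAC ler_pdivrMr ?ltr0n // -!natrM ler_nat /=.
apply: (@leq_trans (maxdeg e * #|S|)); first by rewrite leq_mul2l leq_subr orbT.
rewrite [X in (_ <= X)%N]mulnC; exact: mu_ge.
Qed.
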